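(* Let $V=\{v_1,\dots,v_k\}$ be an amenable collection of vectors subordinate to a $\mathbb{Q}$-nef partition $E_1,\dots,E_{k+1}$ of a complete fan $\Sigma$ in $M_\mathbb{R}$. Then $\mathrm{span}_\mathbb{Z}(v_1,\dots,v_k)$ is a saturated sublattice of $N$. In particular, there is a basis of $N$ containing $v_1,\dots,v_k$.
   Context: $M$ lattice of rank $n$, $N=\mathrm{Hom}(M,\mathbb{Z})$; $\Sigma$ complete fan of strictly convex rational cones in $M_\mathbb{R}$, $\Sigma[1]\subset M$ its primitive ray generators. A $\mathbb{Q}$-nef partition is an ordered partition $\Sigma[1]=E_1\sqcup\dots\sqcup E_{k+1}$ (with convex $\Sigma$-piecewise linear rational functions $\varphi_i$, $\varphi_i(\rho)=\delta_{ij}$ for $\rho\in E_j$). An amenable collection subordinate to it is $V=\{v_1,\dots,v_k\}\subset N$ with $\langle v_i,\rho\rangle=-1$ for $\rho\in E_i$, $\langle v_i,\rho\rangle\ge0$ for $\rho\in E_j$ with $i<j\le k+1$, and $\langle v_i,\rho\rangle=0$ for $\rho\in E_j$ with $j<i$. *)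

(* Defs.v *)
From mathcomp Require Import all_boot all_order all_algebra.
From mathcomp Require Import reals.
Set Implicit Arguments. Unset Strict Implicit. Unset Printing Implicit Defensive.
Import Order.TTheory GRing.Theory Num.Theory.
Local Open Scope ring_scope.

(* Conventions: M = Z^n (row vectors 'rV[int]_n), N = Hom(M,Z) = Z^n with the
   standard pairing; M_R = 'rV[R]_n for a real number type R. *)

Section Toric.
Variables (R : realType) (n : nat).

Definition pair (u m : 'rV[int]_n) : int := \sum_(i < n) u 0 i * m 0 i.

Definition pairR (u x : 'rV[R]_n) : R := \sum_(i < n) u 0 i * x 0 i.

Definition toR (m : 'rV[int]_n) : 'rV[R]_n := map_mx (fun z : int => z%:~R) m.

Definition cone (S : seq 'rV[int]_n) (x : 'rV[R]_n) : Prop :=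
  exists c : 'I_(size S) -> R,
    (forall i, 0 <= c i) /\ x = \sum_(i < size S) c i *: toR (S`_i).

Definition strictly_convex (C : 'rV[R]_n -> Prop) : Prop :=
  forall x, C x -> C (- x) -> x = 0.

Definition face_of (F C : 'rV[R]_n -> Prop) : Prop :=
  exists u : 'rV[R]_n, (forall x, C x -> 0 <= pairR u x) /\
    (forall x, F x <-> (C x /\ pairR u x = 0)).

Definition is_fan (Sigma : seq (seq 'rV[int]_n)) : Prop :=
  [/\ forall s, s \in Sigma -> strictly_convex (cone s),
      forall s (F : 'rV[R]_n -> Prop), s \in Sigma -> face_of F (cone s) ->
        exists2 t, t \in Sigma & forall x, F x <-> cone t x
    & forall s t, s \in Sigma -> t \in Sigma ->
        face_of (fun x => cone s x /\ cone t x) (cone s) /\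
        face_of (fun x => cone s x /\ cone t x) (cone t)].

Definition is_complete_fan (Sigma : seq (seq 'rV[int]_n)) : Prop :=
  is_fan Sigma /\ forall x : 'rV[R]_n, exists2 s, s \in Sigma & cone s x.

Definition primitive (r : 'rV[int]_n) : Prop :=
  r != 0 /\ forall (c : int) (w : 'rV[int]_n), r = c *: w -> `|c| = 1.

Definition is_ray (Sigma : seq (seq 'rV[int]_n)) (rho : 'rV[int]_n) : Prop :=
  primitive rho /\ exists2 s, s \in Sigma & forall x, cone s x <-> cone [:: rho] x.

Definition piecewise_linear_rat (Sigma : seq (seq 'rV[int]_n))
  (phi : 'rV[R]_n -> R) : Prop :=
  forall s, s \in Sigma -> exists m : 'rV[rat]_n,
    forall x, cone s x -> phi x = \sum_(i < n) ratr (m 0 i) * x 0 i.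

Definition convex_fun (phi : 'rV[R]_n -> R) : Prop :=
  forall (x y : 'rV[R]_n) (t : R), 0 <= t -> t <= 1 ->
    phi (t *: x + (1 - t) *: y) <= t * phi x + (1 - t) * phi y.

(* Q-nef partition Sigma[1] = E_1 |_| ... |_| E_{k+1}: the part containing a ray rho
   is E rho : 'I_k.+1 (index j stands for E_{j+1}); parts are nonempty. *)
Definition Qnef_partition (Sigma : seq (seq 'rV[int]_n)) (k : nat)
  (E : 'rV[int]_n -> 'I_k.+1) : Prop :=
  (forall j : 'I_k.+1, exists rho, is_ray Sigma rho /\ E rho = j) /\
  exists phi : 'I_k.+1 -> 'rV[R]_n -> R,
    forall i : 'I_k.+1,
      [/\ piecewise_linear_rat Sigma (phi i), convex_fun (phi i)
        & forall rho, is_ray Sigma rho -> phi i (toR rho) = (E rho == i)%:R].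

(* amenable collection v_1,...,v_k (v i stands for v_{i+1}) subordinate to E *)
Definition amenable (Sigma : seq (seq 'rV[int]_n)) (k : nat)
  (E : 'rV[int]_n -> 'I_k.+1) (v : 'I_k -> 'rV[int]_n) : Prop :=
  forall (i : 'I_k) rho, is_ray Sigma rho ->
    [/\ (nat_of_ord (E rho) == nat_of_ord i)%N -> pair (v i) rho = -1,
        (nat_of_ord i < E rho)%N -> 0 <= pair (v i) rho
      & (E rho < nat_of_ord i)%N -> pair (v i) rho = 0].

End Toric.

Definition in_span (n k : nat) (v : 'I_k -> 'rV[int]_n) (w : 'rV[int]_n) : Prop :=
  exists c : 'I_k -> int, w = \sum_(i < k) c i *: v i.

Definition saturated_span (n k : nat) (v : 'I_k -> 'rV[int]_n) : Prop :=
  forall (m : int) (w : 'rV[int]_n), m != 0 -> in_span v (m *: w) -> in_span v w.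

Definition is_Zbasis (n : nat) (b : 'I_n -> 'rV[int]_n) : Prop :=
  (forall w, in_span b w) /\
  (forall c : 'I_n -> int, \sum_(j < n) c j *: b j = 0 -> forall j, c j = 0).

(* Main.v *)
Require Import Defs.
From mathcomp Require Import all_boot all_order all_algebra.
From mathcomp Require Import reals.
From Stdlib Require Import ClassicalEpsilon.
Import Order.TTheory GRing.Theory Num.Theory.
Local Open Scope ring_scope.

Lemma sum_rows p q (A : 'M[int]_(p, q)) (c : 'I_p -> int) :
  \sum_(i < p) c i *: row i A = (\row_i c i) *m A.
Proof.
apply/rowP => j; rewrite summxE !mxE; apply: eq_bigr => i _; rewrite !mxE //.
Qed.

Lemma unit_basis q (W : 'M[int]_q) : W \in unitmx -> is_Zbasis (fun i => row i W).
Proof.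
move=> Wu; split.
  move=> w; exists (fun i => (w *m invmx W) 0 i); rewrite sum_rows.
  rewrite -[w in LHS](mulmxKV Wu); congr (_ *m _); apply/rowP => j.
  by rewrite !mxE.
move=> c; rewrite sum_rows => /(congr1 (mulmx^~ (invmx W))).
rewrite mulmxK // mul0mx => /rowP H j; have := H j; by rewrite !mxE.
Qed.

Lemma le_kn k n (Vm : 'M[int]_(k, n)) (B : 'M[int]_(n, k)) :
  Vm *m B = 1%:M -> (k <= n)%N.
Proof.
move=> /(congr1 (map_mx (fun z : int => z%:~R : rat))).
rewrite map_mxM map_mx1 => H.
have := mxrankM_maxl (map_mx (fun z : int => z%:~R : rat) Vm) (map_mx (fun z : int => z%:~R : rat) B).
rewrite H mxrank1 => /leq_trans; apply; exact: rank_leq_col.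
Qed.

Lemma ext_basis_aux k m (Vm : 'M[int]_(k, k + m)) (B : 'M[int]_(k + m, k)) :
  Vm *m B = 1%:M -> exists W : 'M[int]_(k + m), W \in unitmx /\ usubmx W = Vm.
Proof.
move=> VB.
have [L Lu [Rm Ru [d _ Hs]]] := int_Smith_normal_form Vm.
set Dk : 'M[int]_k := \matrix_(i, j) (d`_i *+ (i == j :> nat)).
have HD : (\matrix_(i, j) (d`_i *+ (i == j :> nat)) : 'M[int]_(k, k + m)) = row_mx Dk 0.
  apply/matrixP => i j; rewrite -[j]splitK; case: (split j) => j' /=.
    by rewrite row_mxEl !mxE.
  rewrite row_mxEr !mxE /=; case: eqP => [h|]; last by rewrite mulr0n.
  by have := ltn_ord i; rewrite h ltnNge leq_addr.
have HV : Vm = L *m Dk *m usubmx Rm.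
  by rewrite Hs HD -[Rm in LHS]vsubmxK -mulmxA mul_row_col mul0mx addr0 mulmxA.
have LDu : L *m Dk \in unitmx.
  have := VB; rewrite HV -!mulmxA => /mulmx1_unit [Lu' ].
  by rewrite unitmx_mul => /andP[+ _]; rewrite unitmx_mul Lu.
exists (col_mx Vm (dsubmx Rm)); split; last by rewrite col_mxKu.
have -> : col_mx Vm (dsubmx Rm) = block_mx (L *m Dk) 0 0 1%:M *m Rm.
  rewrite -[Rm in RHS]vsubmxK mul_block_col !mul0mx mul1mx addr0 add0r -HV //.
rewrite unitmx_mul Ru andbT unitmxE det_ublock det1 mulr1 -unitmxE //.
Qed.

Lemma ext_basis k n (Vm : 'M[int]_(k, n)) (B : 'M[int]_(n, k)) :
  Vm *m B = 1%:M -> exists (b : 'I_n -> 'rV[int]_n) (f : 'I_k -> 'I_n),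
    is_Zbasis b /\ injective f /\ forall i, b (f i) = row i Vm.
Proof.
move=> VB; have kn := @le_kn _ _ _ _ VB.
have [m Hm] : exists m, n = (k + m)%N by exists (n - k)%N; rewrite subnKC.
subst n.
have [W [Wu HW]] := @ext_basis_aux _ _ _ _ VB.
exists (fun i => row i W), (lshift m); split; first exact: unit_basis.
split; first exact: lshift_inj.
move=> i; rewrite -HW; apply/rowP => j; rewrite !mxE //.
Qed.

Theorem proposition2p3 (R : realType) (n k : nat)
  (Sigma : seq (seq 'rV[int]_n)) (E : 'rV[int]_n -> 'I_k.+1)
  (v : 'I_k -> 'rV[int]_n) :
  is_complete_fan R Sigma ->
  Qnef_partition R Sigma E ->
  amenable R Sigma E v ->
  saturated_span v /\
  exists (b : 'I_n -> 'rV[int]_n) (f : 'I_k -> 'I_n),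
    is_Zbasis b /\ injective f /\ forall i, b (f i) = v i.
Proof.
move=> _ [Hne _] Ham.
have [rho Hrho] : exists rho : 'I_k -> 'rV[int]_n, forall i,
    is_ray R Sigma (rho i) /\ E (rho i) = widen_ord (leqnSn k) i.
  exists (fun i => proj1_sig (constructive_indefinite_description _ (Hne (widen_ord (leqnSn k) i)))).
  move=> i; exact: proj2_sig (constructive_indefinite_description _ (Hne (widen_ord (leqnSn k) i))).
set Vm : 'M[int]_(k, n) := \matrix_(i, j) v i 0 j.
set Rt : 'M[int]_(n, k) := \matrix_(j, i) rho i 0 j.
have HU : forall i j, (Vm *m Rt) i j = pair (v i) (rho j).
  by move=> i j; rewrite !mxE /pair; apply: eq_bigr => l _; rewrite !mxE.
have Uu : Vm *m Rt \in unitmx.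
  rewrite -unitmx_tr unitmxE det_trig.
    rewrite (eq_bigr (fun _ => -1)) ?prodr_const ?unitrX ?unitrN1 // => i _.
    rewrite mxE HU; have [h _ _] := Ham i (rho i) (Hrho i).1; apply: h.
    by rewrite (Hrho i).2.
  apply/is_trig_mxP => i j ij; rewrite mxE HU.
  have [_ _ h] := Ham j (rho i) (Hrho i).1; apply: h; by rewrite (Hrho i).2.
set B := Rt *m invmx (Vm *m Rt).
have VB : Vm *m B = 1%:M by rewrite /B mulmxA mulmxV.
have rowV : forall i, row i Vm = v i by move=> i; apply/rowP => j; rewrite !mxE.
have spanE : forall c : 'I_k -> int, \sum_i c i *: v i = (\row_i c i) *m Vm.
  by move=> c; rewrite -sum_rows; apply: eq_bigr => i _; rewrite rowV.
split; last first.
  have [b [f [Hb [Hf Hbf]]]] := @ext_basis _ _ _ _ VB.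
  by exists b, f; split; [|split; [|move=> i; rewrite Hbf rowV]].
move=> m w m0 [c]; rewrite spanE => Hc.
exists (fun i => (w *m B) 0 i); rewrite spanE.
have H2 := congr1 (mulmx^~ B) Hc.
rewrite /= -mulmxA VB mulmx1 -scalemxAl in H2.
have -> : \row_i (w *m B) 0 i = w *m B by apply/rowP => j; rewrite mxE.
rewrite -H2 -scalemxAl in Hc.
apply/rowP => j; have := congr1 (fun M : 'rV[int]_n => M 0 j) Hc; rewrite /= !mxE ?ord1.
move=> h; exact: (mulfI m0 h).
Qed.
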